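(* Every extended ADE curve $C$ is numerically $2$-connected: for every decomposition $C=A+B$ into nonzero effective divisors $A,B$ one has $A\cdot B\ge2$.
   Context: Work over $\mathbb C$. Let $X$ be a smooth projective surface and $C=\sum_{v\in V}m_vC_v\subset X$ an effective divisor with smooth irreducible components $C_v$, at most two through any point, meeting transversally (for $x\in C_v\cap C_w$, $(m_vC_v)\cap(m_wC_w)$ has local ring $\mathbb C[u,t]/(u^{m_v},t^{m_w})$). The labelled intersection graph $\Gamma$ has vertex set $V$, one edge per intersection point, label $m_v$. $C$ is an \emph{extended ADE curve} if (1) $\Gamma$ is one of: $\tilde A_n$: a cycle of $n+1$ vertices (two vertices, two edges if $n=1$), all labels $1$; $\tilde D_n$ ($n\ge4$): a chain of $n-3$ label-$2$ vertices with two label-$1$ vertices attached to each end (for $n=4$, one label-$2$ vertex with four label-$1$ neighbours); $\tilde E_6$: central label-$3$ vertex with three arms (label $2$ then $1$); $\tilde E_7$: chain $1,2,3,4,3,2,1$ plus a label-$2$ vertex on the label-$4$ vertex; $\tilde E_8$: chain $2,4,6,5,4,3,2,1$ plus a label-$3$ vertex on the label-$6$ vertex; (2) each $C_i$ with $m_i\ge2$ is a smooth rational $(-2)$-curve. *)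

(* Defs.v *)
From mathcomp Require Import all_boot all_order all_algebra.
Set Implicit Arguments. Unset Strict Implicit. Unset Printing Implicit Defensive.
Import Order.TTheory GRing.Theory Num.Theory.

Inductive ADEtype := At of nat | Dt of nat | Et6 | Et7 | Et8.

Definition std_valid (t : ADEtype) : bool :=
  match t with At n => 1 <= n | Dt n => 4 <= n | _ => true end.

Definition std_size (t : ADEtype) : nat :=
  match t with At n => n.+1 | Dt n => n.+1 | Et6 => 7 | Et7 => 8 | Et8 => 9 end.

Definition std_label (t : ADEtype) (i : nat) : nat :=
  match t with
  | At _ => 1
  | Dt n => if i <= n - 4 then 2 else 1
  | Et6 => nth 0 [:: 3; 2; 1; 2; 1; 2; 1] i
  | Et7 => nth 0 [:: 1; 2; 3; 4; 3; 2; 1; 2] i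
  | Et8 => nth 0 [:: 2; 4; 6; 5; 4; 3; 2; 1; 3] i
  end.

(* directed version of the edges *)
Definition std_arc (t : ADEtype) (i j : nat) : bool :=
  match t with
  | At n => j == (i + 1) %% n.+1
  | Dt n => [|| (j == i.+1) && (j <= n - 4),
                (i == 0) && ((j == n - 3) || (j == n - 2))
              | (i == n - 4) && ((j == n - 1) || (j == n))]
  | Et6 => (i, j) \in [:: (0,1); (1,2); (0,3); (3,4); (0,5); (5,6)]
  | Et7 => (i, j) \in [:: (0,1); (1,2); (2,3); (3,4); (4,5); (5,6); (3,7)]
  | Et8 => (i, j) \in [:: (0,1); (1,2); (2,3); (3,4); (4,5); (5,6); (6,7); (2,8)]
  end.

Definition std_edges (t : ADEtype) (i j : nat) : nat :=
  (std_arc t i j : nat) + (std_arc t j i : nat).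

(* A curve C = sum_v m v C_v with components indexed by V and intersection
   numbers I v w = C_v . C_w is an extended ADE curve: its labelled
   intersection graph is (isomorphic to) a standard one, and components of
   multiplicity >= 2 are (-2)-curves. *)
Definition is_extended_ADE (V : finType) (m : V -> nat) (I : V -> V -> int) : Prop :=
  (forall v w, I v w = I w v) /\
  exists t : ADEtype, std_valid t /\
  exists f : V -> 'I_(std_size t), bijective f /\
    (forall v, m v = std_label t (f v)) /\
    (forall v w, v != w -> I v w = Posz (std_edges t (f v) (f w))) /\
    (forall v, 2 <= m v -> I v v = (-2)%R).

Definition inter_num (V : finType) (I : V -> V -> int) (a b : V -> nat) : int :=
  (\sum_(v : V) \sum_(w : V) (Posz (a v * b w) * I v w))%R.

(* Main.v *)
Require Import Defs.
Set Warnings "-notation-overridden,-ambiguous-paths".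
From mathcomp Require Import all_boot all_order all_algebra.
From mathcomp Require Import ring lra zify.
Import Order.TTheory GRing.Theory Num.Theory.

Lemma even_sym (T : eqType) (f : T -> T -> nat) (r : seq T) :
  (forall v w, f v w = f w v) -> (forall v, f v v = 0) ->
  exists k, \sum_(v <- r) \sum_(w <- r) f v w = 2 * k.
Proof.
move=> fs f0; elim: r => [|x r [k IH]]; first by exists 0; rewrite big_nil.
exists (k + \sum_(w <- r) f x w).
rewrite big_cons [\sum_(w <- x :: r) f x w]big_cons f0 add0n.
have E : forall v, \sum_(w <- x :: r) f v w = f x v + \sum_(w <- r) f v w.
  by move=> v; rewrite big_cons fs.
rewrite (eq_bigr _ (fun v _ => E v)).
rewrite big_split /= IH. lia.
Qed.

Lemma sum_delta (V : finType) (F : V -> int) v :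
  (\sum_w F w * Posz (v == w))%R = F v.
Proof.
rewrite (bigD1 v) //= eqxx mulr1 big1 ?addr0 // => w.
by rewrite eq_sym => /negPf ->; rewrite mulr0.
Qed.

Local Open Scope ring_scope.

Lemma rat_ident (V : finType) (e : V -> V -> nat) (m a : V -> nat) :
  (forall v w, e v w = e w v) -> (forall v, (0 < m v)%N) ->
  (forall v, (\sum_w e v w * m w = 2 * m v)%N) ->
  \sum_v \sum_w ((e v w)%:R * ((a v)%:R * (m w)%:R - (a w)%:R * (m v)%:R) ^+ 2
         / ((m v)%:R * (m w)%:R) : rat)
  = 4 * (\sum_v a v * a v)%N%:R - 2 * (\sum_v \sum_w a v * a w * e v w)%N%:R.
Proof.
move=> es mp nul.
have nulR : forall v, \sum_w (e v w)%:R * (m w)%:R = 2 * (m v)%:R :> rat.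
  move=> v; have := congr1 (fun n => n%:R : rat) (nul v).
  by rewrite natr_sum natrM => <-; apply: eq_bigr => w _; rewrite natrM.
have mnz : forall v, (m v)%:R != 0 :> rat by move=> v; rewrite pnatr_eq0 -lt0n mp.
pose F1 v w := (e v w)%:R * (a v)%:R ^+ 2 * (m w)%:R / (m v)%:R : rat.
pose F3 v w := 2 * ((a v * a w * e v w)%N%:R : rat).
transitivity (\sum_v \sum_w (F1 v w + F1 w v - F3 v w)).
  apply: eq_bigr => v _; apply: eq_bigr => w _.
  rewrite /F1 /F3 es !natrM; have := mnz v; have := mnz w.
  move=> h1 h2; field. by rewrite h1 h2.
rewrite (eq_bigr (fun v => \sum_w F1 v w + \sum_w F1 w v - \sum_w F3 v w)); last first.
  by move=> v _; rewrite sumrB big_split.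
rewrite sumrB big_split /= [X in _ + X - _]exchange_big /=.
have H1 : \sum_v \sum_w F1 v w = 2 * (\sum_v a v * a v)%N%:R.
  rewrite natr_sum mulr_sumr; apply: eq_bigr => v _.
  rewrite (eq_bigr (fun w => ((a v)%:R ^+ 2 / (m v)%:R) * ((e v w)%:R * (m w)%:R))).
    by rewrite -mulr_sumr nulR natrM; have := mnz v => h; field.
  by move=> w _; rewrite /F1; have := mnz v => h; field.
rewrite H1.
have H3 : \sum_v \sum_w F3 v w = 2 * (\sum_v \sum_w a v * a w * e v w)%N%:R.
  rewrite natr_sum mulr_sumr; apply: eq_bigr => v _.
  by rewrite natr_sum mulr_sumr.
rewrite H3; ring.
Qed.

Lemma rat_pos (V : finType) (e : V -> V -> nat) (m a : V -> nat) :
  (forall v, (0 < m v)%N) ->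
  (exists v w, (0 < e v w)%N /\ a v * m w != a w * m v)%N ->
  0 < \sum_v \sum_w ((e v w)%:R * ((a v)%:R * (m w)%:R - (a w)%:R * (m v)%:R) ^+ 2
         / ((m v)%:R * (m w)%:R) : rat).
Proof.
move=> mp [v0 [w0 [he hne]]].
have ge0 : forall v w, 0 <= ((e v w)%:R * ((a v)%:R * (m w)%:R - (a w)%:R * (m v)%:R) ^+ 2
         / ((m v)%:R * (m w)%:R) : rat).
  move=> v w; apply: divr_ge0; last by rewrite -natrM ler0n.
  by apply: mulr_ge0; [rewrite ler0n | rewrite sqr_ge0].
have ge0' : forall v, 0 <= \sum_w ((e v w)%:R * ((a v)%:R * (m w)%:R - (a w)%:R * (m v)%:R) ^+ 2
         / ((m v)%:R * (m w)%:R) : rat).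
  by move=> v; apply: sumr_ge0 => w _.
rewrite lt_def; apply/andP; split; last by apply: sumr_ge0.
apply/eqP => /(psumr_eq0P (fun v _ => ge0' v)) /(_ v0 isT).
move=> /(psumr_eq0P (fun w _ => ge0 v0 w)) /(_ w0 isT) /eqP.
rewrite mulf_eq0 invr_eq0.
have h1 : (m v0)%:R * (m w0)%:R != 0 :> rat.
  by rewrite -natrM pnatr_eq0 muln_eq0 negb_or -!lt0n !mp.
have h2 : (e v0 w0)%:R != 0 :> rat by rewrite pnatr_eq0 -lt0n.
have h3 : (a v0)%:R * (m w0)%:R - (a w0)%:R * (m v0)%:R != 0 :> rat.
  by rewrite subr_eq0 -!natrM eqr_nat.
by rewrite (negPf h1) orbF mulf_eq0 (negPf h2) expf_eq0 (negPf h3) andbF.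
Qed.

Lemma nat_ident (V : finType) (e : V -> V -> nat) (m a b : V -> nat) :
  (forall v, (\sum_w e v w * m w = 2 * m v)%N) -> (forall v, a v + b v = m v)%N ->
  ((\sum_v \sum_w a v * b w * e v w) + (\sum_v \sum_w a v * a w * e v w)
   = 2 * (\sum_v a v * a v) + 2 * (\sum_v a v * b v))%N.
Proof.
move=> nul ab; rewrite -big_split /=.
transitivity (\sum_v (2 * (a v * a v) + 2 * (a v * b v)))%N; last first.
  by rewrite big_split /= -!big_distrr.
apply: eq_bigr => v _; rewrite -big_split /=.
transitivity (a v * (2 * m v))%N; last by rewrite -ab; lia.
rewrite -nul big_distrr; apply: eq_bigr => w _ /=; rewrite -ab; lia.
Qed.

Lemma int_form (V : finType) (e : V -> V -> nat) (a b : V -> nat) :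
  \sum_v \sum_w (Posz (a v * b w) * (Posz (e v w) - 2 * Posz (v == w)))
  = Posz (\sum_v \sum_w a v * b w * e v w)%N - 2 * Posz (\sum_v a v * b v)%N.
Proof.
transitivity (\sum_v ((\sum_w a v * b w * e v w)%N%:R - 2 * Posz (a v * b v))).
  apply: eq_bigr => v _.
  transitivity (\sum_w ((a v * b w * e v w)%N%:R - 2 * (Posz (a v * b w) * Posz (v == w)))).
    by apply: eq_bigr => w _; rewrite -!natz !natrM; ring.
  by rewrite sumrB -mulr_sumr (sum_delta _ (fun w => Posz (a v * b w))) natr_sum.
rewrite (sumrB _ _ (fun v => (\sum_w a v * b w * e v w)%N%:R) (fun v => 2 * Posz (a v * b v))).
rewrite -mulr_sumr -!natz !natr_sum.
by congr (_ - 2 * _); apply: eq_bigr => v _; rewrite natz.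
Qed.

Lemma main_gen (V : finType) (e : V -> V -> nat) (m a b : V -> nat) :
  (forall v w, e v w = e w v) -> (forall v, e v v = 0)%N -> (forall v, (0 < m v)%N) ->
  (forall v, (\sum_w e v w * m w = 2 * m v)%N) ->
  (forall v, a v + b v = m v)%N ->
  (exists v w, (0 < e v w)%N /\ a v * m w != a w * m v)%N ->
  2 <= \sum_v \sum_w (Posz (a v * b w) * (Posz (e v w) - 2 * Posz (v == w))).
Proof.
move=> es e0 mp nul ab ex.
rewrite int_form.
have A := @nat_ident V e m a b nul ab.
have s1 : forall v w, (a v * a w * e v w = a w * a v * e w v)%N by move=> v w; rewrite es; lia.
have s2 : forall v, (a v * a v * e v v = 0)%N by move=> v; rewrite e0; lia.
have [k Hk] := even_sym _ (fun v w => a v * a w * e v w)%N (index_enum V) s1 s2.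
have C := @rat_pos V e m a mp ex.
rewrite (@rat_ident V e m a es mp nul) subr_gt0 -!natrM ltr_nat in C.
move: Hk A C.
set N2 := (\sum_v \sum_w a v * a w * e v w)%N.
set N1 := (\sum_v a v * a v)%N.
set M1 := (\sum_v \sum_w a v * b w * e v w)%N.
set M2 := (\sum_v a v * b v)%N.
move=> Hk A C.
have : (2 * M2 + 2 <= M1)%N by lia.
have -> : 2 * Posz M2 = Posz (2 * M2) by rewrite PoszM.
rewrite subzn; last by lia.
rewrite lez_nat; lia.
Qed.
Local Close Scope ring_scope.

Definition ep t i j := if i == j then 0 else std_edges t i j.

Definition nb (t : ADEtype) (i : nat) : seq nat :=
  match t with
  | At n => [:: if i == n then 0 else i.+1; if i == 0 then n else i.-1]
  | Dt n => if i == 0 then (if n == 4 then [:: 1; 2; 3; 4] else [:: 1; n - 3; n - 2])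
            else if i < n - 4 then [:: i.-1; i.+1]
            else if i == n - 4 then [:: n - 5; n - 1; n]
            else if i <= n - 2 then [:: 0] else [:: n - 4]
  | Et6 => nth [::] [:: [:: 1; 3; 5]; [:: 0; 2]; [:: 1]; [:: 0; 4]; [:: 3]; [:: 0; 6]; [:: 5]] i
  | Et7 => nth [::] [:: [:: 1]; [:: 0; 2]; [:: 1; 3]; [:: 2; 4; 7]; [:: 3; 5]; [:: 4; 6]; [:: 5]; [:: 3]] i
  | Et8 => nth [::] [:: [:: 1]; [:: 0; 2]; [:: 1; 3; 8]; [:: 2; 4]; [:: 3; 5]; [:: 4; 6]; [:: 5; 7]; [:: 6]; [:: 2]] i
  end.

Definition par (t : ADEtype) (i : nat) : nat :=
  match t with
  | At n => i.-1
  | Dt n => if i <= n - 4 then i.-1 else if i <= n - 2 then 0 else n - 4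
  | Et6 => nth 0 [:: 0; 0; 1; 0; 3; 0; 5] i
  | Et7 => nth 0 [:: 0; 0; 1; 2; 3; 4; 5; 3] i
  | Et8 => nth 0 [:: 0; 0; 1; 2; 3; 4; 5; 6; 2] i
  end.

Definition zz (t : ADEtype) : nat :=
  match t with At _ => 0 | Dt n => n | Et6 => 2 | Et7 => 0 | Et8 => 7 end.

Definition facts (t : ADEtype) : Prop :=
  let N := std_size t in
  (forall i j, i < N -> j < N -> ep t i j = count_mem j (nb t i)) /\
  (forall i, i < N -> all (fun k => k < N) (nb t i)) /\
  (forall i, i < N -> sumn (map (std_label t) (nb t i)) = 2 * std_label t i) /\
  (forall i, i < N -> 0 < i -> par t i < i /\ 0 < std_edges t i (par t i)) /\
  (zz t < N /\ std_label t (zz t) = 1) /\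
  (forall i, i < N -> 0 < std_label t i).

Lemma iotaP N (P : pred nat) : all P (iota 0 N) -> forall i, i < N -> P i.
Proof. by move=> /allP h i hi; apply: h; rewrite mem_iota. Qed.
Arguments iotaP {N P}.

Lemma modS n i : i <= n -> (i + 1) %% n.+1 = if i == n then 0 else i.+1.
Proof.
move=> hi; case: eqP => [->|hn]; first by rewrite addn1 modnn.
by rewrite modn_small; lia.
Qed.

Ltac solve_bool :=
  repeat (simpl; match goal with
  | |- _ /\ _ => split
  | |- context [if _ then _ else _] => case: ifP => ?; try (exfalso; lia)
  | |- context [?x == ?y :> nat] => case: (x =P y) => ?; try (exfalso; lia)
  | |- context [?x <= ?y] => case: (leqP x y) => ?; try (exfalso; lia)
  end); simpl; lia.

Lemma factsA n : 1 <= n -> facts (At n).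
Proof.
move=> hn; rewrite /facts /=; split; [|split; [|split; [|split; [|split]]]].
- move=> i j hi hj; rewrite /ep /std_edges /= !modS; try lia.
  solve_bool.
- move=> i hi; solve_bool.
- by [].
- move=> i hi h0; rewrite /std_edges /= !modS; try lia.
  solve_bool.
- by [].
- by [].
Qed.

Lemma factsD n : 4 <= n -> facts (Dt n).
Proof.
move=> hn; rewrite /facts /=; split; [|split; [|split; [|split; [|split]]]].
- move=> i j hi hj; rewrite /ep /std_edges /=.
  solve_bool.
- move=> i hi; solve_bool.
- move=> i hi; solve_bool.
- move=> i hi h0; rewrite /std_edges /=.
  solve_bool.
- rewrite /std_label; solve_bool.
- move=> i hi; solve_bool.
Qed.

Lemma factsE t : match t with Et6 | Et7 | Et8 => True | _ => False end -> facts t.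
Proof.
move=> ht; rewrite /facts; split; [|split; [|split; [|split; [|split]]]].
- move=> i j hi hj.
  suff : all (fun i => all (fun j => ep t i j == count_mem j (nb t i)) (iota 0 (std_size t))) (iota 0 (std_size t)).
    by move=> h; have := iotaP h i hi => /iotaP /(_ j hj) /eqP.
  by clear -ht; case: t ht => [? []|? []| | |].
- move=> i hi; suff : all (fun i => all (fun k => k < std_size t) (nb t i)) (iota 0 (std_size t)).
    by move=> h; apply: (iotaP h i hi).
  by clear -ht; case: t ht => [? []|? []| | |].
- move=> i hi; suff : all (fun i => sumn (map (std_label t) (nb t i)) == 2 * std_label t i) (iota 0 (std_size t)).
    by move=> h; apply/eqP; apply: (iotaP h i hi).
  by clear -ht; case: t ht => [? []|? []| | |].
- move=> i hi; suff : all (fun i => (0 < i) ==> (par t i < i) && (0 < std_edges t i (par t i))) (iota 0 (std_size t)).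
    by move=> h /(implyP (iotaP h i hi)) /andP.
  by clear -ht; case: t ht => [? []|? []| | |].
- by case: t ht => [? []|? []| | |].
- move=> i hi; suff : all (fun i => 0 < std_label t i) (iota 0 (std_size t)).
    by move=> h; apply: (iotaP h i hi).
  by clear -ht; case: t ht => [? []|? []| | |].
Qed.

Lemma facts_all t : std_valid t -> facts t.
Proof.
case: t => [n|n| | |] /= h.
- exact: factsA.
- exact: factsD.
all: by apply: factsE.
Qed.

Lemma sum_count N (F g : nat -> nat) (s : seq nat) :
  all (fun k => (k < N)%N) s -> (forall j, (j < N)%N -> F j = count_mem j s) ->
  (\sum_(j < N) F j * g j = sumn (map g s))%N.
Proof.
move=> hs hF.
rewrite (eq_bigr (fun j : 'I_N => count_mem (nat_of_ord j) s * g j)%N); last first.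
  by move=> j _; rewrite hF.
elim: s hs {hF} => [|k s IH] /=; first by move=> _; rewrite big1.
move=> /andP [hk hs].
rewrite (eq_bigr (fun j : 'I_N => (k == j) * g j + count_mem (nat_of_ord j) s * g j)%N); last first.
  by move=> j _; rewrite mulnDl.
rewrite big_split /= IH //; congr (_ + _)%N.
rewrite (bigD1 (Ordinal hk)) //= eqxx mul1n big1 ?addn0 // => j hj.
case: (k =P j) => [hkj|]; last by rewrite mul0n.
by move: hj; rewrite -val_eqE /= hkj eqxx.
Qed.

Theorem lemma3p6 (V : finType) (m : V -> nat) (I : V -> V -> int) :
  is_extended_ADE m I ->
  forall a b : V -> nat,
    (forall v, a v + b v = m v) ->
    (exists v, a v != 0) ->
    (exists v, b v != 0) ->
    (2 <= inter_num I a b)%R.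
Proof.
move=> [Isym [t [tv [f [fbij [hm [hI hd]]]]]]] a b ab [v1 hv1] [u1 hu1].
have [F1 [F1b [F1c [F2 [[F3a F3b] F4]]]]] := @facts_all t tv.
pose e v w := if v == w then 0%N else std_edges t (f v) (f w).
have finj := bij_inj fbij.
have mp : forall v, (0 < m v)%N by move=> v; rewrite hm; apply: F4; exact: ltn_ord.
have -> : inter_num I a b =
   (\sum_v \sum_w (Posz (a v * b w) * (Posz (e v w) - 2 * Posz (v == w))))%R.
  rewrite /inter_num; apply: eq_bigr => v _; apply: eq_bigr => w _.
  rewrite /e; case: eqP => [<-|/eqP hvw].
  - case: (leqP 2 (m v)) => hmv.
      by rewrite hd.
    have -> : (a v * b v = 0)%N by move: (ab v) hmv; nia.
    by rewrite !mul0r.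
  - by rewrite hI //= mulr0 subr0.
apply: main_gen => //.
- by move=> v w; rewrite /e eq_sym; case: eqP => // _; rewrite /std_edges addnC.
- by move=> v; rewrite /e eqxx.
- move=> v; rewrite hm -(F1c (f v) (ltn_ord _)).
  rewrite -(@sum_count _ (ep t (f v)) _ _ (F1b _ (ltn_ord (f v))) (fun j hj => F1 (f v) j (ltn_ord _) hj)).
  rewrite (reindex f); last exact: onW_bij.
  by apply: eq_bigr => w _; rewrite /e /ep val_eqE (inj_eq finj) hm.
case: (boolP [exists v, exists w, (0 < e v w)%N && (a v * m w != a w * m v)%N]).
  by move=> /existsP [v /existsP [w /andP [h1 h2]]]; exists v, w.
move=> /existsPn hno; exfalso.
have H : forall v w, (0 < e v w)%N -> (a v * m w = a w * m v)%N.
  move=> v w he; move: (hno v) => /existsPn /(_ w).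
  by rewrite he /= negbK => /eqP.
have [g fg gf] := fbij.
have N0 : (0 < std_size t)%N by apply: leq_ltn_trans F3a.
pose v0 := g (Ordinal N0).
have R : forall k (hk : (k < std_size t)%N),
    (a (g (Ordinal hk)) * m v0 = a v0 * m (g (Ordinal hk)))%N.
  elim/ltn_ind => k IH hk.
  case: (posnP k) => [k0|kpos].
    by subst k; have -> : Ordinal hk = Ordinal N0 by apply: val_inj.
  have [hp he] := F2 k hk kpos.
  have hpN : (par t k < std_size t)%N by apply: ltn_trans hk.
  have IHp := IH _ hp hpN.
  have hij : (0 < e (g (Ordinal hk)) (g (Ordinal hpN)))%N.
    rewrite /e !gf (inj_eq (can_inj gf)) -val_eqE /=.
    by case: eqP => [hk'|_]; [move: hp; rewrite -hk' ltnn | exact: he].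
  have Hij := H _ _ hij.
  move: (mp (g (Ordinal hpN))) IHp Hij.
  set x := g (Ordinal hk); set y := g (Ordinal hpN).
  move=> my IHp Hij.
  apply/eqP; rewrite -(eqn_pmul2l my); apply/eqP.
  nia.
have R' : forall v, (a v * m v0 = a v0 * m v)%N.
  move=> v; have := R _ (ltn_ord (f v)).
  by rewrite (_ : Ordinal _ = f v) ?fg //; apply: val_inj.
pose vz := g (Ordinal F3a).
have mz : m vz = 1%N by rewrite hm gf /= F3b.
have Rz := R' vz; have Rv := R' v1; have Ru := R' u1.
have abz := ab vz; have abu := ab u1; have m0 := mp v0.
rewrite mz in Rz abz.
have [az|az] : a vz = 0%N \/ a vz = 1%N by lia.
- rewrite az mul0n muln1 in Rz; rewrite -Rz mul0n in Rv.
  by move: Rv hv1 m0; nia.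
- rewrite az mul1n muln1 in Rz; rewrite -Rz mulnC in Ru.
  move: Ru => /eqP; rewrite eqn_pmul2l // => /eqP Ru.
  by move: hu1 abu; rewrite -Ru; lia.
Qed.
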